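(* Let $G=(V,E)$ be a control flow graph, let $p$ be a predicate node with successors $s_1,s_2$ in $G$ and with at least two successors in $A_p$, and let $i\in\{1,2\}$. Let $a,b\in V_p\setminus\{p\}$ be two distinct nodes. Then every maximal path from $s_i$ in $G$ contains $a$ before any occurrence of $b$ if and only if there is an $s_i$-strip containing both $a$ and $b$ in which $a$ occurs before $b$.
   Context: A control flow graph (CFG) is a finite directed graph $G=(V,E)$ in which every node has at most two outgoing edges; nodes with exactly two outgoing edges are predicate nodes. A path from $n_1$ is a nonempty finite or infinite sequence of nodes with each adjacent pair an edge; it is maximal if it is infinite or its last node has no successor. $V_p$ is the set of nodes occurring on all maximal paths from $p$ in $G$. For $V'\subseteq V$, a $V'$-interval from $x$ to $y$ is a finite path $n_1\ldots n_k$ in $G$ with $k\ge 2$, $n_1=x\in V'$, $n_k=y\in V'$, and $n_i\notin V'$ for $1<i<k$. $A_p$ is the directed graph with node set $V_p$ and an edge $(x,y)$ iff there is a $V_p$-interval from $x$ to $y$ in $G$. For $i\in\{1,2\}$, $V_i$ is the set of nodes $n\in V_p$ such that there is a finite path in $G$ from $s_i$ to $n$ whose nodes other than the last one all lie outside $V_p$ (possibly $n=s_i$). An $s_i$-strip is a finite path $n\ldots m$ in $A_p$ whose first node lies in $V_i$ and all of whose other nodes lie in $V_p\setminus V_i$ (i.e., it belongs to $V_i.(V_p\setminus V_i)^*$), such that the successor of $m$ in $A_p$ is a node in $V_i$. *)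

(* Defs.v *)
From mathcomp Require Import all_boot.
Set Implicit Arguments. Unset Strict Implicit. Unset Printing Implicit Defensive.

Section CFG.
Variables (T : finType) (e : rel T).

Definition is_cfg : Prop := forall x : T, #|[set y | e x y]| <= 2.

Definition fin_maxpath (x : T) (r : seq T) : Prop :=
  path e x r /\ forall y, ~~ e (last x r) y.

(* infinite (hence maximal) path f 0, f 1, ... starting at x *)
Definition inf_maxpath (x : T) (f : nat -> T) : Prop :=
  f 0 = x /\ forall k, e (f k) (f k.+1).

Definition Vp (p n : T) : Prop :=
  (forall r, fin_maxpath p r -> n \in p :: r) /\
  (forall f, inf_maxpath p f -> exists k, f k = n).

(* V'-interval from x to y : path x :: m ++ [:: y] (length >= 2),
   endpoints in V', interior nodes m outside V' *)
Definition interval (V' : T -> Prop) (x y : T) : Prop :=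
  V' x /\ V' y /\
  exists m : seq T, path e x (rcons m y) /\ forall z, z \in m -> ~ V' z.

Definition Ap (p x y : T) : Prop := Vp p x /\ Vp p y /\ interval (Vp p) x y.

(* V_i for the successor s = s_i : nodes n of V_p reachable from s by a finite
   path whose nodes other than the last lie outside V_p (possibly n = s) *)
Definition Vi (p s n : T) : Prop :=
  Vp p n /\
  (n = s \/ exists m : seq T, path e s (rcons m n) /\
                             forall z, z \in s :: m -> ~ Vp p z).

Definition Ap_path (p x : T) (r : seq T) : Prop :=
  forall i, i < size r -> Ap p (nth x (x :: r) i) (nth x r i).

(* s-strip (s = s_i): a path n :: r in A_p with n in V_i, all other nodes in
   V_p \ V_i, and whose last node m has a (unique) successor in A_p, lying in V_i *)
Definition strip (p s : T) (q : seq T) : Prop :=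
  match q with
  | [::] => False
  | n :: r =>
      [/\ Ap_path p n r, Vi p s n,
          (forall z, z \in r -> Vp p z /\ ~ Vi p s z) &
          exists y, (forall z, Ap p (last n r) z <-> z = y) /\ Vi p s y]
  end.

End CFG.

Definition occurs_before (T : eqType) (a b : T) (q : seq T) : Prop :=
  exists i j, i < j < size q /\ nth a q i = a /\ nth a q j = b.

Definition fin_before (T : eqType) (a b : T) (q : seq T) : Prop :=
  exists k, k < size q /\ nth a q k = a /\ forall j, j <= k -> nth a q j <> b.

Definition inf_before (T : Type) (a b : T) (f : nat -> T) : Prop :=
  exists k, f k = a /\ forall j, j <= k -> f j <> b.

(* Main.v *)
Require Import Defs.
From mathcomp Require Import all_boot zify.
From Stdlib Require Import ClassicalEpsilon Classical.

Module Aux.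
Set Implicit Arguments. Unset Strict Implicit. Unset Printing Implicit Defensive.
Definition bP (P : Prop) : bool := if excluded_middle_informative P then true else false.
Lemma bPP P : reflect P (bP P).
Proof. rewrite /bP; case: excluded_middle_informative => h; constructor; done. Qed.

Section Gen.
Variables (T : finType) (e : rel T).

Definition mpin x (A : pred T) :=
  (exists r, fin_maxpath e x r /\ all A (x :: r)) \/
  (exists g, inf_maxpath e x g /\ forall k, A (g k)).

Definition full x z := ~ mpin x (predC1 z).

Lemma mpin_mono x (A B : pred T) : (forall z, A z -> B z) -> mpin x A -> mpin x B.
Proof.
move=> AB [[r [h1 h2]]|[g [h1 h2]]]; [left; exists r | right; exists g]; split => //.
  by apply/allP => z /(allP h2) /AB.
by move=> k; apply: AB.
Qed.

Lemma full_refl x : full x x.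
Proof.
by case=> [[r [_ /andP [/= h _]]]|[g [[g0 _] h]]]; [rewrite eqxx in h | move: (h 0); rewrite g0 /= eqxx].
Qed.

Lemma path_iota (g : nat -> T) m k :
  (forall t, t < m + k -> e (g t) (g t.+1)) -> path e (g m) (map g (iota m.+1 k)).
Proof.
elim: k m => [|k IH] m h //=.
rewrite (h m); last by rewrite addnS ltnS leq_addr.
apply: IH => t; rewrite addSnnS; exact: h.
Qed.

Lemma last_iota (g : nat -> T) m k : last (g m) (map g (iota m.+1 k)) = g (m + k).
Proof. by elim: k m => [|k IH] m /=; [rewrite addn0 | rewrite IH addSnnS]. Qed.

Lemma belast_iota (g : nat -> T) m k : belast (g m) (map g (iota m.+1 k)) = map g (iota m k).
Proof. by elim: k m => [|k IH] m //=; rewrite IH. Qed.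

Lemma mpin_pre x s A : path e x s -> all A (x :: s) -> mpin (last x s) A -> mpin x A.
Proof.
move=> ps As [[r [[pr sr] Ar]]|[g [[g0 gs] Ag]]].
  left; exists (s ++ r); split; first split.
  - by rewrite cat_path ps.
  - by rewrite last_cat.
  - by move: As Ar => /= /andP [-> As] /andP [_ Ar]; rewrite all_cat As Ar.
right; exists (fun k => if k <= size s then nth x (x :: s) k else g (k - size s)).
split; first split.
- by [].
- move=> k; case: (ltngtP k (size s)) => hk.
  + by move/pathP: ps; apply.
  + rewrite subSn; last by apply: ltnW.
    exact: gs.
  + rewrite hk subSnn.
    have -> : nth x (x :: s) (size s) = last x s.
      by move: (nth_last x (x :: s)) => /= ->.
    by rewrite -g0 gs.
- move=> k; case: ifP => hk; last exact: Ag.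
  by apply: (allP As); apply: mem_nth.
Qed.

Lemma lasso y c : path e y c -> c != [::] -> last y c = y -> mpin y (mem (y :: c)).
Proof.
move=> pc cn lc; right.
have n0 : 0 < size c by case: c cn {pc lc}.
exists (fun k => nth y (y :: c) (k %% size c)); split; first split.
- by rewrite mod0n.
- move=> k.
  have hi : k %% size c < size c by rewrite ltn_mod.
  have -> : nth y (y :: c) (k.+1 %% size c) = nth y c (k %% size c).
    rewrite -addn1 -modnDml.
    case: (ltngtP (k %% size c).+1 (size c)) => h.
    + by rewrite addn1 modn_small.
    + by move: h; rewrite ltnNge hi.
    + rewrite addn1 h modnn /=.
      have -> : k %% size c = (size c).-1 by rewrite -[in RHS]h.
      by rewrite nth_last lc.
  by move/pathP: pc; apply.
- move=> k; apply: mem_nth => /=.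
  by rewrite ltnS ltnW // ltn_mod.
Qed.

Lemma hit x A y : mpin x A ->
  mpin x (predD1 A y) \/
  exists s, [/\ path e x s, last x s = y, y \notin belast x s, all A (x :: s) & mpin y A].
Proof.
case=> [[r [[pr sr] Ar]]|[g [[g0 gs] Ag]]].
  have : y \notin x :: r \/ exists s, [/\ path e x s, last x s = y, y \notin belast x s,
          all A (x :: s) & mpin y A].
    elim: r x pr sr Ar => [|z r IH] x pr sr Ar.
      case: (eqVneq x y) => [<-|xy]; last by left; rewrite inE eq_sym.
      right; exists [::]; split => //=.
      by left; exists [::].
    case: (eqVneq x y) => [<-|xy].
      right; exists [::]; split => //=.
      - by move: Ar => /and3P [-> _ _].
      - by left; exists (z :: r).
    move: pr => /= /andP [exz pr]; move: Ar => /= /andP [Ax Ar].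
    case: (IH z pr sr Ar) => [h|[s [ps ls ns As my]]].
      by left; rewrite inE negb_or eq_sym xy.
    right; exists (z :: s); split => //=.
    - by rewrite exz.
    - by rewrite inE negb_or eq_sym xy.
    - by rewrite Ax.
  case=> [h|h]; last by right.
  left; left; exists r; split => //; apply/allP => w wr /=.
  rewrite (allP Ar) // andbT; apply/eqP => wy; move: h; rewrite -wy wr //.
case: (classic (exists k, g k = y)) => [ex|nex].
  have ex' : exists k, g k == y by case: ex => k hk; exists k; apply/eqP.
  case: (ex_minnP ex') => k /eqP gk kmin.
  right; exists (map g (iota 1 k)); split.
  - rewrite -g0; apply: path_iota => t _; exact: gs.
  - by rewrite -g0 last_iota.
  - rewrite -g0 belast_iota; apply/mapP => [[t]]; rewrite mem_iota add0n => /andP [_ tk] gt.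
    by move: (kmin t); rewrite -gt eqxx => /(_ isT); rewrite leqNgt tk.
  - rewrite -g0 -/(map g (0 :: iota 1 k)); apply/allP => w /mapP [t _ ->]; exact: Ag.
  - right; exists (fun t => g (t + k)); split; first split.
    + by rewrite add0n.
    + by move=> t; rewrite addSn.
    + by move=> t; apply: Ag.
left; right; exists g; split => // k /=; rewrite Ag andbT.
by apply/eqP => gk; apply: nex; exists k.
Qed.

Definition nxt (z : T) := odflt z [pick w | e z w].

Lemma nxtP z : (exists w, e z w) -> e z (nxt z).
Proof.
rewrite /nxt; case: pickP => [w -> //|h [w ew]]; by move: (h w); rewrite ew.
Qed.

Lemma EX x : mpin x predT.
Proof.
pose g k := iter k nxt x.
case: (classic (exists k, ~ exists w, e (g k) w)) => [ex|nex].
  have ex' : exists k, bP (~ exists w, e (g k) w) by case: ex => k hk; exists k; apply/bPP.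
  case: (ex_minnP ex') => k /bPP hk kmin.
  left; exists (map g (iota 1 k)); split; last by apply/allP.
  split.
  - have -> : x = g 0 by [].
    apply: path_iota => t tk; rewrite /g iterS; apply: nxtP.
    apply: NNPP => h; have := kmin t; rewrite add0n in tk.
    by move=> /(_ (introT (bPP _) h)); rewrite leqNgt tk.
  - have -> : x = g 0 by [].
    by rewrite last_iota add0n => w; apply/negP => ew; apply: hk; exists w.
right; exists g; split => //; split => // k.
rewrite /g iterS; apply: nxtP; apply: NNPP => h; apply: nex; by exists k.
Qed.

Lemma full_last x s z : path e x s -> z \notin x :: s -> full x z -> full (last x s) z.
Proof.
move=> ps zs fx h; apply: fx; apply: (mpin_pre ps) => //.
by apply/allP => w ws /=; apply/eqP => wz; move: zs; rewrite -wz ws.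
Qed.

Lemma reach x z : full x z -> exists s, [/\ path e x s, last x s = z & z \notin belast x s].
Proof.
move=> fz; case: (hit z (EX x)) => [h|[s [ps ls ns _ _]]]; last by exists s.
exfalso; apply: fz; apply: mpin_mono h => w /andP [].
by rewrite /= => ->.
Qed.

Lemma FP (a : pred T) s : has a s -> exists m z rest, [/\ s = rcons m z ++ rest, a z & ~~ has a m].
Proof.
elim: s => [//|w s IH] /= /orP [aw|hs].
  by exists [::], w, s.
case: (boolP (a w)) => aw; first by exists [::], w, s.
case: (IH hs) => m [z [rest [-> az hm]]].
by exists (w :: m), z, rest; rewrite /= (negbTE aw).
Qed.

Lemma prefix_to x s z : path e x s -> z \in belast x s -> forall w, w \notin belast x s ->
  exists t, [/\ path e x t, last x t = z & w \notin x :: t].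
Proof.
elim: s x => [//|v s IH] x /= /andP [exv ps].
rewrite inE => /orP [/eqP ->|zb] w; rewrite inE negb_or => /andP [wx wb].
  by exists [::]; split => //; rewrite inE.
case: (IH v ps zb w wb) => t [pt lt wt].
by exists (v :: t); split => //=; [rewrite exv | rewrite inE negb_or wx].
Qed.


Lemma pre_inf x s g : path e x s -> inf_maxpath e (last x s) g ->
  inf_maxpath e x (fun k => if k <= size s then nth x (x :: s) k else g (k - size s)).
Proof.
move=> ps [g0 gs]; split => // k.
case: (ltngtP k (size s)) => hk.
- by move/pathP: ps; apply.
- rewrite subSn; last by apply: ltnW.
  exact: gs.
- rewrite hk subSnn.
  have -> : nth x (x :: s) (size s) = last x s.
    by move: (nth_last x (x :: s)) => /= ->.
  by rewrite -g0 gs.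
Qed.

Lemma last_take (x : T) s j : j <= size s -> last x (take j s) = nth x (x :: s) j.
Proof.
elim: s x j => [|y s IH] x j.
  by case: j.
case: j => [//|j] /= h.
by rewrite IH // (set_nth_default x y).
Qed.
End Gen.
Lemma path_suf (T : eqType) (e : rel T) x s1 z s2 : path e x (s1 ++ z :: s2) -> path e z s2.
Proof. by rewrite cat_path => /andP [_ /= /andP [_ ->]]. Qed.
Lemma path_pre (T : eqType) (e : rel T) x s1 s2 : path e x (s1 ++ s2) -> path e x s1.
Proof. by rewrite cat_path => /andP [->]. Qed.
Lemma last_suf (T : eqType) (x : T) s1 z s2 : last x (s1 ++ z :: s2) = last z s2.
Proof. by rewrite last_cat. Qed.

Section Main.
Variables (T : finType) (e : rel T) (p si y1 y2 : T).
Hypotheses (epsi : e p si) (y12 : y1 <> y2) (Ay1 : Ap e p p y1) (Ay2 : Ap e p p y2).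

Local Notation P := (Vp e p).
Definition Pb z := bP (P z).

Lemma Vp_full z : P z -> full e p z.
Proof.
move=> [hf hi] [[r [fr Ar]]|[g [ig Ag]]].
  by move: (allP Ar _ (hf r fr)); rewrite /= eqxx.
by case: (hi g ig) => k gk; move: (Ag k); rewrite /= gk eqxx.
Qed.

Lemma Pp : P p.
Proof. by split => [r _|g [g0 _]]; [rewrite mem_head | exists 0]. Qed.

Lemma nP_has m z : ~~ has Pb m -> z \in m -> ~ P z.
Proof. by move=> hm zm Pz; move/hasPn: hm => /(_ z zm); move/bPP. Qed.

Lemma CW c : path e p c -> c != [::] -> last p c = p -> forall z, P z -> z \in p :: c.
Proof.
move=> pc cn lc z Pz; apply: NNPP => zc; apply: (Vp_full Pz).
apply: mpin_mono (lasso pc cn lc) => w /= wc; apply/eqP => wz; apply: zc; by rewrite -wz.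
Qed.

Lemma interval_of x y : Ap e p x y -> exists m, path e x (rcons m y) /\ forall z, z \in m -> ~ P z.
Proof. by case=> _ [_ [_ [_ [m [pm hm]]]]]; exists m. Qed.

Lemma OP m : (forall z, z \in m -> ~ P z) -> path e p (rcons m p) -> False.
Proof.
move=> hm pm.
have cw := CW pm; rewrite last_rcons in cw.
have h : forall y, P y -> y = p.
  have ne : rcons m p != [::] by case: (m).
  move=> y Py; move: (cw ne erefl y Py).
  rewrite inE mem_rcons inE => /orP [/eqP //|/orP [/eqP //| ym]].
  by case: (hm _ ym).
have P1 : P y1 by case: Ay1 => _ [].
have P2 : P y2 by case: Ay2 => _ [].
by apply: y12; rewrite (h y1 P1) (h y2 P2).
Qed.

Lemma noret_aux n c : size c <= n -> path e p c -> c != [::] -> last p c = p -> False.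
Proof.
elim: n c => [|n IH] c; first by case: c.
move=> sc pc cn lc.
have pin : p \in c.
  by case/lastP: c cn lc {sc pc} => // c' z _; rewrite last_rcons => ->; rewrite mem_rcons mem_head.
have hc : has Pb c by apply/hasP; exists p => //; apply/bPP; exact: Pp.
case: (FP hc) => m [c1 [rest [ec Pc1 hm]]].
move/bPP: Pc1 => Pc1.
rewrite cat_rcons in ec; subst c.
case: (eqVneq c1 p) => [c1p|c1p].
  subst c1; apply: (@OP m) => [z|]; first exact: nP_has.
  by rewrite -cats1; move: pc; rewrite -cat1s catA; apply: path_pre.
have [y [Ay yc1]] : exists y, Ap e p p y /\ y <> c1.
  case: (eqVneq y1 c1) => [h|h]; last by exists y1; split => //; apply/eqP.
  by exists y2; split => //; rewrite -h => /esym.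
have Py : P y by case: Ay => _ [].
case: (interval_of Ay) => my [pmy hmy].
have yp : y != p by apply/eqP => yp; subst y; apply: (OP hmy pmy).
have : y \in p :: m ++ c1 :: rest by apply: CW.
rewrite inE (negbTE yp) /= mem_cat inE => /orP [ym|/orP [/eqP //|yr]].
  by case: (nP_has hm ym).
case/splitPr: yr pc lc sc => r1 r2 pc lc sc.
have pr2 : path e y r2 by move: pc; rewrite -cat_cons catA; apply: path_suf.
have lr2 : last y r2 = p by rewrite -lc -cat_cons catA last_suf.
have : c1 \in p :: (rcons my y ++ r2).
  apply: CW => //; first by rewrite cat_path pmy last_rcons pr2.
  - by case: (my).
  - by rewrite last_cat last_rcons.
rewrite inE (negbTE c1p) /= mem_cat mem_rcons inE => /orP [/orP [/eqP h|c1m]|c1r].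
- by case: yc1.
- by case: (hmy _ c1m).
case/splitPr: c1r pc lc sc pr2 lr2 => r3 r4 pc lc sc _ _.
apply: (IH (m ++ c1 :: r4)).
- move: sc; rewrite !size_cat /= !size_cat /=; rewrite size_cat /=; lia.
- have h1 : path e p (rcons m c1).
    by move: pc; rewrite -cat_rcons; apply: path_pre.
  have h2 : path e c1 r4.
    by move: pc; rewrite -cat_cons -cat_cons !catA; apply: path_suf.
  by rewrite -cat_rcons cat_path h1 last_rcons h2.
- by case: (m).
- by rewrite last_suf; move: lc; rewrite -cat_cons -cat_cons !catA last_suf.
Qed.

Lemma noret s : path e p s -> p \notin s.
Proof.
move=> ps; apply/negP => pin; case/splitPr: pin ps => s1 s2 h.
apply: (@noret_aux (size (rcons s1 p)) (rcons s1 p)) => //.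
- by move: h; rewrite -cat_rcons; apply: path_pre.
- by case: (s1).
- by rewrite last_rcons.
Qed.

Lemma reachP x : P x -> exists s, path e p s /\ last p s = x.
Proof. by move/Vp_full/reach => [s [ps ls _]]; exists s. Qed.

Lemma Ap_np x y : P x -> Ap e p x y -> y <> p.
Proof.
move=> Px Axy yp; case: (reachP Px) => s [ps ls].
case: (interval_of Axy) => m [pm _].
have : path e p (s ++ rcons m y) by rewrite cat_path ps ls.
move/noret; by rewrite mem_cat mem_rcons yp mem_head orbT.
Qed.

Definition Q z := P z /\ z <> p.

Lemma Ap_Q x y : P x -> Ap e p x y -> Q y.
Proof. by move=> Px A; split; [case: A => _ [] | apply: Ap_np A]. Qed.

Lemma Qy1 : Q y1. Proof. exact: Ap_Q Pp Ay1. Qed.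
Lemma Qy2 : Q y2. Proof. exact: Ap_Q Pp Ay2. Qed.

Lemma Apfull y : Ap e p p y -> forall z, Q z -> full e y z.
Proof.
move=> Ay z [Pz zp]; case: (eqVneq z y) => [->|zy]; first exact: full_refl.
case: (interval_of Ay) => m [pm hm].
have := full_last pm _ (Vp_full Pz); rewrite last_rcons; apply.
rewrite inE mem_rcons inE negb_or negb_or zy; apply/andP; split; first by apply/eqP.
by apply/negP => zm; case: (hm _ zm).
Qed.

Lemma F x z : Q x -> Q z -> full e x z.
Proof.
move=> Qx Qz.
case: (eqVneq x y1) => [->|x1]; first by apply: Apfull.
case: (eqVneq x y2) => [->|x2]; first by apply: Apfull.
move=> h.
have h1 : mpin e x (predD1 (predC1 z) y1).
  case: (hit y1 h) => [//|[s [_ _ _ _ my]]].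
  by case: (Apfull Ay1 Qz).
have h2 : mpin e x (predD1 (predD1 (predC1 z) y1) y2).
  case: (hit y2 h1) => [//|[s [_ _ _ _ my]]].
  case: (Apfull Ay2 Qz); apply: mpin_mono my => w /andP [_ hw]; exact: hw.
have main : forall n rho u v, size rho <= n -> (u = y1 /\ v = y2 \/ u = y2 /\ v = y1) ->
    path e u rho -> last u rho = x -> False.
  elim=> [|n IH] rho u v.
    case: rho => //= _ [[-> _]|[-> _]] _ xe; [by rewrite xe eqxx in x1 | by rewrite xe eqxx in x2].
  move=> sr uv pr lr.
  have Au : Ap e p p u by case: uv => [[-> _]|[-> _]].
  have Pv : P v by case: uv => [[_ ->]|[_ ->]]; [case: Ay2 => _ [] | case: Ay1 => _ []].
  have vu : v != u by case: uv => [[-> ->]|[-> ->]]; apply/eqP => // /esym.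
  case: (interval_of Au) => mu [pmu hmu].
  have pc : path e p (rcons mu u ++ rho) by rewrite cat_path pmu last_rcons.
  case: (boolP (v \in p :: (rcons mu u ++ rho))) => vin; last first.
    have := full_last pc vin (Vp_full Pv); rewrite last_cat last_rcons lr.
    apply; apply: mpin_mono h2 => w /andP [wy2 /andP [wy1 _]].
    by case: uv => [[_ ->]|[_ ->]].
  have vp : v != p.
    by case: uv => [[_ ->]|[_ ->]]; apply/eqP; [exact: (Ap_np Pp Ay2) | exact: (Ap_np Pp Ay1)].
  move: vin; rewrite inE (negbTE vp) /= mem_cat mem_rcons inE (negbTE vu) /=.
  case/orP => [vm|]; first by case: (hmu _ vm).
  move=> vr; case/splitPr: vr pr lr sr => r1 r2 pr lr sr.
  apply: (IH r2 v u).
  - by move: sr; rewrite size_cat /=; lia.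
  - by case: uv => [[-> ->]|[-> ->]]; [right | left].
  - exact: path_suf pr.
  - by rewrite -lr last_suf.
case: (reach (Apfull Ay1 Qx)) => rho [pr lr _].
by apply: (main (size rho) rho y1 y2) => //; left.
Qed.

Lemma H u w s x : path e u s -> last u s = w -> w \notin belast u s -> x \in belast u s ->
  Ap e p x u -> P w -> w != u -> mpin e u (predC1 w).
Proof.
move=> ps ls wb xb Axu Pw wu.
case: (prefix_to ps xb wb) => t [pt lt wt].
case: (interval_of Axu) => mu [pmu hmu].
have pD : path e u (t ++ rcons mu u) by rewrite cat_path pt lt.
have ne : t ++ rcons mu u != [::] by apply/eqP => /(congr1 size); rewrite size_cat size_rcons addnS.
have h := lasso pD ne; rewrite last_cat last_rcons in h.
apply: mpin_mono (h erefl) => z /= zD.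
apply/eqP => zw; subst z.
move: zD; rewrite -cat_cons mem_cat (negbTE wt) /= mem_rcons inE (negbTE wu) /=.
by move=> wm; case: (hmu _ wm).
Qed.

Lemma U x u w : Q x -> Ap e p x u -> Ap e p x w -> u = w.
Proof.
move=> [Px xp] Au Aw; apply: NNPP => uw.
have Qu := Ap_Q Px Au; have Qw := Ap_Q Px Aw.
case: (reach (F Qu Qw)) => s1 [p1 l1 n1].
case: (reach (F Qw Qu)) => s2 [p2 l2 n2].
have s1n : s1 != [::] by case: (s1) l1 => //= h; case: uw.
have pc : path e u (s1 ++ s2) by rewrite cat_path p1 l1.
have h := lasso pc; rewrite last_cat l1 in h.
have xin : x \in u :: s1 ++ s2.
  apply: NNPP => xn; apply: (F Qu (conj Px xp)).
  have ne : s1 ++ s2 != [::] by case: (s1) s1n.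
  apply: mpin_mono (h ne l2) => z /= zin.
  by apply/eqP => zx; subst z; apply: xn.
have wu : w != u by apply/eqP => /esym.
have uw' : u != w by apply/eqP.
move: xin; rewrite -cat_cons lastI l1 cat_rcons mem_cat lastI l2 mem_rcons inE.
case/orP => [xb|/orP [/eqP xu|xb]].
- by apply: (F Qu Qw); apply: (H p1 l1 n1 xb Au) => //; case: Qw.
- apply: (F Qu Qw); apply: (H p1 l1 n1 _ Au) => //; last by case: Qw.
  by rewrite xu; case: (s1) s1n => //= ? ? _; rewrite mem_head.
- by apply: (F Qw Qu); apply: (H p2 l2 n2 xb Aw) => //; case: Qu.
Qed.


Lemma succ_ex x : Q x -> exists y, Ap e p x y.
Proof.
move=> Qx.
have [y [Qy yx]] : exists y, Q y /\ y <> x.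
  case: (eqVneq y1 x) => [h|h]; last by exists y1; split; [exact: Qy1 | apply/eqP].
  by exists y2; split; [exact: Qy2 | rewrite -h => /esym].
case: (reach (F Qx Qy)) => s [ps ls _].
have sn : s != [::] by case: (s) ls => //= h; case: yx.
have hs : has Pb s.
  apply/hasP; exists y; last by apply/bPP; case: Qy.
  by case: (s) sn ls => // w s' _ /= <-; apply: mem_last.
case: (FP hs) => m [z [rest [es /bPP Pz hm]]].
exists z; split; first by case: Qx.
split => //; split; first by case: Qx.
split => //; exists m; split; first by move: ps; rewrite es; apply: path_pre.
by move=> w wm; apply: nP_has hm wm.
Qed.

Definition fP x := epsilon (inhabits x) (fun y => Ap e p x y).

Lemma f_spec x : Q x -> Ap e p x (fP x) /\ Q (fP x).
Proof.
move=> Qx; have A : Ap e p x (fP x) by rewrite /fP; apply: epsilon_spec; apply: succ_ex.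
by split => //; apply: Ap_Q A; case: Qx.
Qed.

Lemma f_uniq x y : Q x -> Ap e p x y -> y = fP x.
Proof. by move=> Qx A; apply: (U Qx A); case: (f_spec Qx). Qed.

Lemma iterQ k x : Q x -> Q (iter k fP x).
Proof. by move=> Qx; elim: k => //= k IH; case: (f_spec IH). Qed.

Lemma W n x s : size s <= n -> Q x -> path e x s -> P (last x s) ->
  exists K, [/\ iter K fP x = last x s,
     (forall t, t <= K -> iter t fP x \in x :: s) &
     (forall z, z \in x :: s -> P z -> exists2 t, t <= K & iter t fP x = z)].
Proof.
elim: n x s => [|n IH] x s.
  case: s => // _ Qx _ _; exists 0; split => // [t|z]; first by rewrite leqn0 => /eqP ->; rewrite mem_head.
  by rewrite inE => /eqP -> _; exists 0.
move=> sn Qx ps Pl.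
case: s sn ps Pl => [|w s'] sn ps Pl.
  exists 0; split => // [t|z]; first by rewrite leqn0 => /eqP ->; rewrite mem_head.
  by rewrite inE => /eqP -> _; exists 0.
have hs : has Pb (w :: s') by apply/hasP; exists (last x (w :: s')); [exact: (mem_last w s') | apply/bPP].
case: (FP hs) => m [z [rest [es /bPP Pz hm]]].
rewrite es cat_rcons in ps Pl sn *.
have Axz : Ap e p x z.
  split; first by case: Qx.
  split => //; split; first by case: Qx.
  split => //; exists m; split; first by move: ps; rewrite -cat_rcons; apply: path_pre.
  by move=> v vm; apply: nP_has hm vm.
have zf := f_uniq Qx Axz.
have Qz : Q z by rewrite zf; case: (f_spec Qx).
have pr : path e z rest := path_suf ps.
rewrite last_suf in Pl *.
case: (IH z rest _ Qz pr Pl) => [|K [h1 h2 h3]].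
  by move: sn; rewrite /= size_cat /=; lia.
exists K.+1; split.
- by rewrite iterSr -zf.
- case=> [|t] tK; first by rewrite mem_head.
  rewrite iterSr -zf.
  by move: (h2 t tK); rewrite !inE mem_cat !inE => /orP [->|->]; rewrite ?orbT.
- move=> v; rewrite inE mem_cat => /orP [/eqP -> _|/orP [vm|vr] Pv]; first by exists 0.
    by case: (nP_has hm vm).
  case: (h3 v vr Pv) => t tK ht; exists t.+1 => //.
  by rewrite iterSr -zf.
Qed.

Lemma R K x : Q x -> exists s, [/\ path e x s, last x s = iter K fP x &
   (forall z, z \in x :: s -> P z -> exists2 t, t <= K & iter t fP x = z)].
Proof.
elim: K x => [|K IH] x Qx.
  by exists [::]; split => // z; rewrite inE => /eqP -> _; exists 0.
case: (f_spec Qx) => Af Qf.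
case: (IH _ Qf) => s [ps ls hs].
case: (interval_of Af) => m [pm hm].
exists (rcons m (fP x) ++ s); split.
- by rewrite cat_path pm last_rcons.
- by rewrite last_cat last_rcons ls iterSr.
- move=> z; rewrite inE mem_cat mem_rcons inE => /orP [/eqP -> _|/orP [/orP [zf|zm]|zs] Pz].
  + by exists 0.
  + by exists 1 => //; rewrite (eqP zf).
  + by case: (hm _ zm).
  + have : z \in fP x :: s by rewrite inE zs orbT.
    move=> /(hs _) /(_ Pz) [t tK <-]; exists t.+1 => //; by rewrite iterSr.
Qed.

Lemma finj x x' : Q x -> Q x' -> fP x = fP x' -> x = x'.
Proof.
pose Qs := [set z | bP (Q z)].
have sub1 : [set fP z | z in Qs] \subset Qs.
  apply/subsetP => z /imsetP [w]; rewrite inE => /bPP Qw ->; rewrite inE; apply/bPP.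
  by case: (f_spec Qw).
have sub2 : Qs \subset [set fP z | z in Qs].
  apply/subsetP => z; rewrite inE => /bPP Qz.
  have [y [Qy yz]] : exists y, Q y /\ y <> z.
    case: (eqVneq y1 z) => [h|h]; last by exists y1; split; [exact: Qy1 | apply/eqP].
    by exists y2; split; [exact: Qy2 | rewrite -h => /esym].
  case: (reach (F Qy Qz)) => s [ps ls _].
  have Pz : P z by case: Qz.
  rewrite -ls in Pz.
  case: (W (leqnn _) Qy ps Pz) => [[|K] [h1 _ _]].
    by case: yz; rewrite -ls -h1.
  apply/imsetP; exists (iter K fP y); first by rewrite inE; apply/bPP; apply: iterQ.
  by rewrite -iterS h1.
have inj : {in Qs &, injective fP}.
  apply/imset_injP; rewrite eqn_leq; apply/andP; split; apply: subset_leq_card => //.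
move=> Qx Qx' h; apply: inj => //; rewrite inE; exact/bPP.
Qed.

Lemma iter_inj j x y : Q x -> Q y -> iter j fP x = iter j fP y -> x = y.
Proof.
elim: j => // j IH Qx Qy; rewrite !iterS => h; apply: IH => //.
by apply: finj => //; apply: iterQ.
Qed.

Lemma period x : Q x -> exists2 d, 0 < d & iter d fP x = x.
Proof.
move=> Qx.
have : ~~ uniq (traject fP x #|T|.+1).
  apply/negP => /card_uniqP h; move: (max_card (mem (traject fP x #|T|.+1))).
  by rewrite h size_traject ltnn.
case/(uniqPn x) => i [j [ij]]; rewrite size_traject => jn.
rewrite !nth_traject // ?(ltn_trans ij) // => h.
exists (j - i); first by rewrite subn_gt0.
apply: (@iter_inj i) => //; first by apply: iterQ.
by rewrite -iterD addnC subnK ?(ltnW ij).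
Qed.

Lemma period_mul x d m : iter d fP x = x -> iter (d * m) fP x = x.
Proof. by move=> h; elim: m => [|m IH]; rewrite ?muln0 // mulnS iterD IH h. Qed.


Lemma si_path_np s : path e si s -> p \notin si :: s.
Proof. move=> ps; apply: noret => /=; by rewrite epsi. Qed.

Lemma Vi_Q n : Vi e p si n -> Q n.
Proof.
case=> Pn [en|[m [pm _]]]; split => // hp.
  by move: (si_path_np (s := [::]) isT); rewrite -en -hp mem_head.
by move: (si_path_np pm); rewrite -hp inE mem_rcons mem_head orbT.
Qed.

Lemma SPLIT s : path e si s -> P (last si s) -> exists v0 rest,
  [/\ Vi e p si v0, path e v0 rest, last v0 rest = last si s,
      (forall z, z \in v0 :: rest -> z \in si :: s) &
      (forall z, z \in si :: s -> P z -> z \in v0 :: rest)].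
Proof.
move=> ps Pl.
case: (classic (P si)) => Psi.
  by exists si, s; split => //; split => //; left.
have hs : has Pb s.
  case: (s) Pl ps => [/= h|w s' Pl _]; first by case: Psi.
  by apply/hasP; exists (last si (w :: s')); [exact: (mem_last w s') | apply/bPP].
case: (FP hs) => m [v0 [rest [es /bPP Pv hm]]].
rewrite es cat_rcons in ps Pl *.
exists v0, rest; split.
- split => //; right; exists m; split; first by move: ps; rewrite -cat_rcons; apply: path_pre.
  move=> z; rewrite inE => /orP [/eqP ->//|zm]; exact: nP_has hm zm.
- exact: path_suf ps.
- by rewrite last_suf.
- by move=> z zv; rewrite inE mem_cat zv !orbT.
- move=> z; rewrite inE mem_cat => /orP [/eqP -> //|/orP [zm|//]] Pz.
  by case: (nP_has hm zm).
Qed.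

Lemma full_si z : Q z -> full e si z.
Proof.
move=> [Pz zp]; case: (eqVneq z si) => [->|zs]; first exact: full_refl.
move=> h; apply: (Vp_full Pz); apply: (@mpin_pre _ _ _ [:: si]) => //=.
- by rewrite epsi.
- rewrite (eq_sym si) zs /= andbT; apply/eqP => pz; apply: zp; by rewrite pz.
Qed.

Variables (a b : T).
Hypotheses (Pa : P a) (Pbb : P b) (ap : a <> p) (bp : b <> p) (ab : a <> b).

Definition NB := forall s, path e si s -> last si s = b -> a \in si :: s.

Lemma LHS_NB :
  ((forall r, fin_maxpath e si r -> fin_before a b (si :: r)) /\
   (forall f, inf_maxpath e si f -> inf_before a b f)) -> NB.
Proof.
move=> [hf hi] s ps ls; apply: NNPP => an.
have nthb : nth a (si :: s) (size s) = b.
  by rewrite (set_nth_default si) // -ls; move: (nth_last si (si :: s)) => /= ->.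
case: (EX e b) => [[r [[pr sr] _]]|[g [ig _]]].
  have fm : fin_maxpath e si (s ++ r) by split; [rewrite cat_path ps ls | rewrite last_cat ls].
  case: (hf _ fm) => k [ks [ka kb]].
  case: (leqP k (size s)) => hk.
    apply: an; rewrite -ka -cat_cons nth_cat /= ltnS hk; apply: mem_nth; by rewrite /= ltnS.
  apply: (kb (size s) (ltnW hk)).
  by rewrite -cat_cons nth_cat /= ltnSn.
rewrite -ls in ig.
case: (hi _ (pre_inf ps ig)) => k [ka kb].
case: (leqP k (size s)) => hk.
  by apply: an; rewrite -ka hk; apply: mem_nth; rewrite /= ltnS.
apply: (kb (size s) (ltnW hk)); rewrite leqnn.
by rewrite -nthb (set_nth_default si).
Qed.

Lemma NB_LHS : NB ->
  ((forall r, fin_maxpath e si r -> fin_before a b (si :: r)) /\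
   (forall f, inf_maxpath e si f -> inf_before a b f)).
Proof.
move=> nb; split.
  move=> r [pr sr].
  have ain : a \in si :: r.
    have : a \in p :: si :: r by apply: Pa.1; split => //=; rewrite epsi.
    by rewrite inE => /orP [/eqP //|].
  exists (index a (si :: r)); split; first by rewrite index_mem.
  split; first by rewrite nth_index.
  move=> j jk hb.
  have jk' : j < index a (si :: r).
    rewrite ltn_neqAle jk andbT; apply/eqP => je; apply: ab.
    by rewrite -hb je nth_index.
  have js : j <= size r.
    by move: (leq_trans jk' (index_size a (si :: r))).
  have := nb (take j r).
  rewrite (path_pre (s2 := drop j r)) ?cat_take_drop // last_take //.
  rewrite (set_nth_default a) ?ltnS // hb => /(_ isT erefl) h.
  have : a \in take j.+1 (si :: r) by [].
  by move/index_ltn; rewrite ltnNge => /negP; apply.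
move=> g [g0 gs].
have ig' : inf_maxpath e p (fun k => if k is k'.+1 then g k' else p).
  split => // [[|k]] //=; by rewrite g0.
case: (Pa.2 _ ig') => [[|k]] /= hk; first by case: ap.
have ex : exists k, g k == a by exists k; apply/eqP.
case: (ex_minnP ex) => k0 /eqP gk0 kmin.
exists k0; split => // j jk gj.
have jk' : j < k0 by rewrite ltn_neqAle jk andbT; apply/eqP => je; apply: ab; rewrite -gj je.
have := nb (map g (iota 1 j)).
rewrite -g0 last_iota add0n gj => /(_ _ erefl).
move=> h; have := h (path_iota (k := j) (m := 0) (fun t _ => gs t)).
rewrite -/(map g (0 :: iota 1 j)) => /mapP [t]; rewrite -/(iota 0 j.+1) mem_iota add0n => /andP [_ tj] ht.
by move: (kmin t); rewrite -ht eqxx => /(_ isT); rewrite leqNgt (leq_trans tj jk').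
Qed.


Lemma strip_iter n r : Q n -> Ap_path e p n r ->
  forall t, t <= size r -> nth n (n :: r) t = iter t fP n.
Proof.
move=> Qn hA; elim=> [//|t IH] ht.
have := hA t ht; rewrite IH ?(ltnW ht) // => A.
by rewrite iterS -(f_uniq (iterQ t Qn) A).
Qed.

Lemma strip_NB q : strip e p si q -> occurs_before a b q -> NB.
Proof.
case: q => [//|n r] [hA Vn hr _] [i [j [/andP [ij js] [ia jb]]]].
move=> s ps ls; apply: NNPP => an.
have Qn := Vi_Q Vn.
have Pl : P (last si s) by rewrite ls.
case: (SPLIT ps Pl) => v0 [rest [Vv0 pv lv sub _]].
have Qv := Vi_Q Vv0.
have Pl' : P (last v0 rest) by rewrite lv.
case: (W (leqnn _) Qv pv Pl') => K [hK hin _].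
rewrite lv ls in hK.
have na : forall t, t <= K -> iter t fP v0 <> a.
  by move=> t tK ht; apply: an; apply: sub; rewrite -ht; apply: hin.
have js' : j <= size r by rewrite -ltnS.
have hj : iter j fP n = b by rewrite -(strip_iter Qn hA js') (set_nth_default a).
have is' : i <= size r by apply: ltnW (leq_trans ij js').
have hi : iter i fP n = a.
  by rewrite -(strip_iter Qn hA is') (set_nth_default a) // ltnS.
case: (leqP j K) => jK.
  have e1 : iter j fP (iter (K - j) fP v0) = iter j fP n by rewrite -iterD subnKC // hK hj.
  have e2 := iter_inj (iterQ _ Qv) Qn e1.
  apply: (na (i + (K - j))); last by rewrite iterD e2.
  by lia.
have e1 : iter K fP v0 = iter K fP (iter (j - K) fP n) by rewrite -iterD subnKC ?(ltnW jK) // hK hj.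
have e2 := iter_inj Qv (iterQ _ Qn) e1.
have hjK : 0 < j - K by rewrite subn_gt0.
have : v0 \in r.
  rewrite e2 -(strip_iter Qn hA (leq_trans (leq_subr _ _) js')).
  case: (j - K) hjK (leq_trans (leq_subr K j) js') => // t _ ht /=.
  by apply: mem_nth.
by move/hr => [_].
Qed.

Lemma avoid_contra w L : NB -> Vi e p si w -> (forall t, t <= L -> iter t fP w <> a) ->
  iter L fP w = b -> False.
Proof.
move=> nb Vw hav hL.
have Qw := Vi_Q Vw.
case: (R L Qw) => s [ps ls hs].
have ain : forall z, z \in w :: s -> z <> a.
  move=> z zs za; subst z; case: (hs _ zs Pa) => t tL; exact: hav.
case: Vw => _ [ew|[m [pm hm]]].
  subst w; apply: ain a _ erefl; apply: nb => //; by rewrite ls.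
have := nb (rcons m w ++ s); rewrite cat_path pm last_cat last_rcons ps ls hL.
move=> /(_ isT erefl); rewrite cat_rcons -cat_cons mem_cat => /orP [am|aws].
  by case: (hm _ am).
exact: ain aws erefl.
Qed.


Lemma NB_strip : NB -> exists q, strip e p si q /\ occurs_before a b q.
Proof.
move=> nb.
have Qb : Q b by [].
case: (reach (full_si Qb)) => s [ps ls _].
have ain := nb s ps ls.
have Pl : P (last si s) by rewrite ls.
case: (SPLIT ps Pl) => v0 [rest [Vv0 pv lv _ sub2]].
have Qv := Vi_Q Vv0.
have Pl' : P (last v0 rest) by rewrite lv.
case: (W (leqnn _) Qv pv Pl') => K [hK _ hP]; rewrite lv ls in hK.
case: (hP a (sub2 a ain Pa) Pa) => t0 t0K ht0.
have t0K' : t0 < K.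
  by rewrite ltn_neqAle t0K andbT; apply/eqP => e0; apply: ab; rewrite -ht0 e0 hK.
pose Pa' := fun t => (t < K) && (iter t fP v0 == a).
have exa : exists t, Pa' t by exists t0; rewrite /Pa' t0K' ht0 eqxx.
have uba : forall t, Pa' t -> t <= K by move=> t /andP [/ltnW].
case: (ex_maxnP exa uba) => ta /andP [taK /eqP hta] tamax.
pose Pv' := fun t => (t <= ta) && bP (Vi e p si (iter t fP v0)).
have exv : exists t, Pv' t by exists 0; rewrite /Pv' leq0n; apply/bPP.
have ubv : forall t, Pv' t -> t <= ta by move=> t /andP [].
case: (ex_maxnP exv ubv) => tn /andP [tnta /bPP Vtn] tnmax.
have noV : forall t, tn < t -> t <= K -> ~ Vi e p si (iter t fP v0).
  move=> t tnt tK Vt.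
  case: (leqP t ta) => tta.
    by move: (tnmax t); rewrite /Pv' tta => /(_ (introT (bPP _) Vt)); rewrite leqNgt tnt.
  apply: (avoid_contra (L := K - t) nb Vt).
  - move=> t' t'L; rewrite -iterD => h.
    case: (ltnP (t' + t) K) => h2.
      move: (tamax (t' + t)); rewrite /Pa' h2 h eqxx => /(_ isT) h3.
      by move: tta; rewrite ltnNge (leq_trans (leq_addl _ _) h3).
    have h4 : t' + t = K by lia.
    by apply: ab; rewrite -h -hK h4.
  - by rewrite -iterD subnK.
pose n := iter tn fP v0.
have Qn : Q n by apply: iterQ.
case: (period Qn) => d d0 hd.
pose Ps := fun t => (K - tn < t) && bP (Vi e p si (iter t fP n)).
have exs : exists t, Ps t.
  exists (d * K.+1); rewrite /Ps period_mul //; apply/andP; split; last by apply/bPP.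
  exact: (leq_ltn_trans (leq_subr tn K) (leq_trans (ltnSn K) (leq_pmull K.+1 d0))).
case: (ex_minnP exs) => ts /andP [tsK /bPP Vts] tsmin.
case: ts tsK Vts tsmin => [//|L] tsK Vts tsmin.
have nthq : forall t, t < L.+1 -> nth n (traject fP n L.+1) t = iter t fP n.
  by move=> t tL; rewrite nth_traject.
exists (traject fP n L.+1); split.
  rewrite /=; split => //.
  - move=> i; rewrite size_traject => iL.
    have e1 := nthq i (ltnW iL); have e2 := nthq i.+1 iL.
    rewrite /= in e1 e2; rewrite e1 e2.
    by case: (f_spec (iterQ i Qn)).
  - move=> z /trajectP [t tL ->]; rewrite -iterSr.
    split; first by case: (iterQ t.+1 Qn).
    case: (leqP t.+1 (K - tn)) => h.
      rewrite /n -iterD; apply: noV; first by rewrite -{1}(add0n tn) ltn_add2r.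
      by move: h; rewrite leq_subRL // ?(leq_trans tnta (ltnW taK)) // addnC.
    move=> Vt; move: (tsmin t.+1); rewrite /Ps h => /(_ (introT (bPP _) Vt)).
    by rewrite ltnS leqNgt tL.
  - exists (iter L.+1 fP n); split => // z; rewrite last_traject.
    split => [A|->]; first by rewrite iterS; apply: f_uniq A; apply: iterQ.
    by rewrite iterS; case: (f_spec (iterQ L Qn)).
exists (ta - tn), (K - tn).
have tnK : tn <= K by lia.
have i1 : ta - tn < L.+1 by lia.
have j1 : K - tn < L.+1 by lia.
split; first by rewrite size_traject; apply/andP; split; lia.
split.
- by rewrite (set_nth_default n) ?size_traject // nthq // /n -iterD subnK.
- by rewrite (set_nth_default n) ?size_traject // nthq // /n -iterD subnK.
Qed.

End Main.
End Aux.
Import Aux.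

Theorem lemma4p12 (T : finType) (e : rel T) (p s1 s2 si a b : T) :
  is_cfg e ->
  s1 != s2 -> e p s1 -> e p s2 ->
  (exists y1 y2, y1 <> y2 /\ Ap e p p y1 /\ Ap e p p y2) ->
  (si = s1 \/ si = s2) ->
  Vp e p a -> Vp e p b -> a <> p -> b <> p -> a <> b ->
  ((forall r, fin_maxpath e si r -> fin_before a b (si :: r)) /\
   (forall f, inf_maxpath e si f -> inf_before a b f))
  <->
  (exists q, strip e p si q /\ occurs_before a b q).
Proof.
move=> _ _ e1 e2 [y1 [y2 [y12 [A1 A2]]]] hsi Pa Pb ap bp ab.
have epsi : e p si by case: hsi => ->.
split.
  move=> H; apply: (NB_strip epsi y12 A1 A2 Pa Pb bp ab).
  exact: LHS_NB H.
case=> q [sq oq]; apply: (NB_LHS epsi Pa ap ab).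
exact: (strip_NB epsi y12 A1 A2 Pb sq oq).
Qed.
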